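(* Let $\mathcal{S}\in\mathrm{Rep}$. Then there is a unique standard extended multi-segment $\mathcal{S}'\in[\mathcal{S}]$.
   Context: Formal extended segment: $([A,B]_\rho,\mu)$ with $\rho$ irreducible self-dual supercuspidal of some $\mathrm{GL}_d(F)$ ($F$ $p$-adic), $A-B\in\mathbb{Z}_{\ge0}$, $\mu\in\mathbb{Z}$, $\mu\equiv b\pmod2$ with $b=A-B+1$, $a=A+B+1$; extended segment if moreover $|\mu|\le b$. A formal extended multi-segment $\mathcal{S}$: a finite set $C_{\mathcal{S}}$ of such $\rho$ and sequences $(([A_i^\rho,B_i^\rho]_\rho,\mu_i^\rho))_{i=1}^{n_\rho}$ of formal extended segments with: $A_i^\rho>A_j^\rho$ and $B_i^\rho>B_j^\rho$ imply $i>j$; $A_i^\rho+B_i^\rho\ge0$; $\bigoplus_{\rho,i}\rho\boxtimes S_{a_i^\rho}\boxtimes S_{b_i^\rho}$ is an Arthur parameter of good parity for some $G_n$ ($G_n$ split $\mathrm{SO}_{2n+1}(F)$ or $\mathrm{Sp}_{2n}(F)$); $\sum_\rho\sum_i(\lfloor\mu_i^\rho/2\rfloor+\mu_i^\rho\sum_{j<i}(b_j^\rho-1))\equiv0\pmod2$. Extended multi-segment: all entries are extended segments. Admissible: for each $\rho$ with some $B_i^\rho<0$, $B_i^\rho>B_j^\rho\Rightarrow i>j$. Condition (N): $|A_i^\rho-A_{i-1}^\rho|+|B_i^\rho-B_{i-1}^\rho|\ge|\mu_i^\rho-\mu_{i-1}^\rho|$ for all $\rho$, $1<i\le n_\rho$.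 Reorder $R_i^\rho$ (changing only positions $i,i+1$ of the $\rho$-sequence): if $[A_i,B_i]\subseteq[A_{i+1},B_{i+1}]$, replace by $([A_{i+1},B_{i+1}]_\rho,2\mu_i-\mu_{i+1}),([A_i,B_i]_\rho,\mu_i)$; if $[A_i,B_i]\supseteq[A_{i+1},B_{i+1}]$, replace by $([A_{i+1},B_{i+1}]_\rho,\mu_{i+1}),([A_i,B_i]_\rho,2\mu_{i+1}-\mu_i)$; if $A_{i+1}\ge A_i$, $B_{i+1}\ge B_i$, do nothing. $[\mathcal{S}]$ is the equivalence class generated by these operations. $\mathrm{Rep}$: admissible extended multi-segments $\mathcal{S}$ such that every element of $[\mathcal{S}]$ satisfies (N), and $|\hat\mu_i^\rho|\le a_i^\rho$ for all $i,\rho$, where $\hat\mu_i^\rho=\mu_i^\rho$ if $B_i^\rho\in\mathbb{Z}$ and $\mu_i^\rho-1$ otherwise. $\mathcal{S}$ is standard if for all $\rho$, $i,j$: ($B_i^\rho<B_j^\rho$, or $B_i^\rho=B_j^\rho$ and $A_i^\rho>A_j^\rho$) implies $i<j$. *)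

(* Defs.v *)
From HB Require Import structures.
From mathcomp Require Import all_boot all_order all_algebra.
From mathcomp Require Import finmap.
From Stdlib Require Import Relations.
Set Implicit Arguments. Unset Strict Implicit. Unset Printing Implicit Defensive.
Import Order.TTheory GRing.Theory Num.Theory.
Local Open Scope ring_scope.
Local Open Scope fset_scope.
Local Open Scope ring_scope.


(* A (formal extended) segment ([A,B]_rho, mu); A, B are half-integers,
   stored as rationals. The cuspidal rho is the key of the multi-segment. *)
Record seg := Seg { sA : rat; sB : rat; smu : int }.
Definition seg0 := Seg 0 0 0.
Definition seg2t (s : seg) : rat * rat * int := (sA s, sB s, smu s).
Definition t2seg (t : rat * rat * int) : seg := Seg t.1.1 t.1.2 t.2.
Lemma seg2tK : cancel seg2t t2seg. Proof. by case. Qed.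
HB.instance Definition _ := Equality.copy seg (can_type seg2tK).

(* b = A - B + 1 and a = A + B + 1 (natural numbers on valid data) *)
Definition bnat (s : seg) : nat := Num.truncn (sA s - sB s + 1).
Definition anat (s : seg) : nat := Num.truncn (sA s + sB s + 1).

Definition formal_seg (s : seg) : Prop :=
  (sA s - sB s \is a Num.nat) /\ (2 %| smu s - (bnat s)%:Z)%Z.

Definition ext_seg (s : seg) : Prop :=
  formal_seg s /\ (absz (smu s) <= bnat s)%N.

Section MS.
Variable Cusp : choiceType.

(* A (formal extended) multi-segment: finite set C_S = domf S of cuspidals,
   with, for each rho, the sequence of its segments. *)
Definition mseg := {fmap Cusp -> seq seg}.

Definition segs (S : mseg) (r : Cusp) : seq seg := odflt [::] (S.[? r])%fmap.

Definition sg (S : mseg) (r : Cusp) (i : nat) : seg := nth seg0 (segs S r) i.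

Variables (deg : Cusp -> nat)          (* rho is a rep of GL_{deg rho}(F) *)
          (symp : Cusp -> bool)        (* rho self-dual of symplectic type *)
          (Chi : zmodType)             (* characters of F^x, written additively *)
          (detc : Cusp -> Chi).        (* central character = det of the L-parameter of rho *)

(* rho (x) S_a (x) S_b is of symplectic type *)
Definition summand_symp (r : Cusp) (s : seg) : bool :=
  symp r (+) ~~ odd (anat s) (+) ~~ odd (bnat s).

Inductive group_kind := SOodd | Spev .

(* \oplus rho (x) S_a (x) S_b is a local Arthur parameter of good parity
   for G_n of the given kind *)
Definition good_parity_AP (S : mseg) (g : group_kind) (n : nat) : Prop :=
  (forall r, r \in domf S -> forall s, s \in segs S r ->
       (sA s + sB s \is a Num.int) /\ (0 <= sA s + sB s)%R) /\
  match g with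
  | SOodd =>
      (* dual group Sp_{2n}(C): all summands symplectic, dimension 2n *)
      (forall r, r \in domf S -> forall s, s \in segs S r -> summand_symp r s) /\
      (\sum_(r <- enum_fset (domf S)) \sum_(s <- segs S r)
           deg r * anat s * bnat s)%N = (2 * n)%N
  | Spev =>
      (* dual group SO_{2n+1}(C): all summands orthogonal, dimension
         2n+1, trivial determinant *)
      (forall r, r \in domf S -> forall s, s \in segs S r -> ~~ summand_symp r s) /\
      (\sum_(r <- enum_fset (domf S)) \sum_(s <- segs S r)
           deg r * anat s * bnat s)%N = (2 * n).+1 /\
      \sum_(r <- enum_fset (domf S)) \sum_(s <- segs S r)
           detc r *+ (anat s * bnat s) = 0
  end.

Definition parity_sum (S : mseg) : int :=
  \sum_(r <- enum_fset (domf S))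
    \sum_(i < size (segs S r))
      ((smu (sg S r i) %/ 2)%Z +
       smu (sg S r i) * (\sum_(j < i) ((bnat (sg S r j))%:Z - 1))).

Definition formal_ext_ms (S : mseg) : Prop :=
  (forall r, r \in domf S -> forall s, s \in segs S r -> formal_seg s) /\
  (forall r i j, (i < size (segs S r))%N -> (j < size (segs S r))%N ->
      sA (sg S r j) < sA (sg S r i) -> sB (sg S r j) < sB (sg S r i) ->
      (j < i)%N) /\
  (forall r, r \in domf S -> forall s, s \in segs S r -> 0 <= sA s + sB s) /\
  (exists g n, good_parity_AP S g n) /\
  (2 %| parity_sum S)%Z.

Definition ext_ms (S : mseg) : Prop :=
  formal_ext_ms S /\ (forall r, r \in domf S -> forall s, s \in segs S r -> ext_seg s).

Definition admissible (S : mseg) : Prop :=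
  forall r, (exists2 i, (i < size (segs S r))%N & sB (sg S r i) < 0) ->
  forall i j, (i < size (segs S r))%N -> (j < size (segs S r))%N ->
     sB (sg S r j) < sB (sg S r i) -> (j < i)%N.

Definition condN (S : mseg) : Prop :=
  forall r i, (0 < i)%N -> (i < size (segs S r))%N ->
    `|((smu (sg S r i) - smu (sg S r i.-1))%:~R : rat)|
      <= `|sA (sg S r i) - sA (sg S r i.-1)| + `|sB (sg S r i) - sB (sg S r i.-1)|.

(* the operation R_i on two consecutive segments x = position i,
   y = position i+1, producing x', y' *)
Definition rstep (x y x' y' : seg) : Prop :=
  (
   (sA x <= sA y /\ sB y <= sB x) /\
   x' = Seg (sA y) (sB y) (2 * smu x - smu y) /\ y' = Seg (sA x) (sB x) (smu x))
  \/
  (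
   (sA y <= sA x /\ sB x <= sB y) /\
   x' = Seg (sA y) (sB y) (smu y) /\ y' = Seg (sA x) (sB x) (2 * smu y - smu x)).

Definition Rstep (S T : mseg) : Prop :=
  exists r s1 x y s2 x' y', r \in domf S /\
    segs S r = s1 ++ x :: y :: s2 /\ rstep x y x' y' /\
    T = (S.[r <- s1 ++ x' :: y' :: s2])%fmap.

(* [S]: the equivalence class generated by the operations R_i^rho
   (the "do nothing" case is covered by reflexivity) *)
Definition equiv_ms (S T : mseg) : Prop := clos_refl_sym_trans mseg Rstep S T.

Definition hatmu (s : seg) : int :=
  if sB s \is a Num.int then smu s else smu s - 1.

Definition in_Rep (S : mseg) : Prop :=
  ext_ms S /\ admissible S /\
  (forall T, equiv_ms S T -> condN T) /\
  (forall r i, (i < size (segs S r))%N -> (absz (hatmu (sg S r i)) <= anat (sg S r i))%N).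

Definition standard (S : mseg) : Prop :=
  forall r i j, (i < size (segs S r))%N -> (j < size (segs S r))%N ->
    (sB (sg S r i) < sB (sg S r j) \/
     (sB (sg S r i) = sB (sg S r j) /\ sA (sg S r j) < sA (sg S r i))) ->
    (i < j)%N.

End MS.

(* Main.v *)
Require Import Defs.
From HB Require Import structures.
From mathcomp Require Import all_boot all_order all_algebra.
From mathcomp Require Import finmap.
From mathcomp Require Import zify ring lra.
From Stdlib Require Import Relations.
Set Implicit Arguments. Unset Strict Implicit. Unset Printing Implicit Defensive.
Import Order.TTheory GRing.Theory Num.Theory.
Local Open Scope ring_scope.

Definition ivl_lt (x y : seg) : bool :=
  [&& sA x <= sA y, sB y <= sB x & (sA x != sA y) || (sB x != sB y)].
Definition refl_mu (x y : seg) : seg := Seg (sA y) (sB y) (2 * smu x - smu y).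

Inductive fstep : seq seg -> seq seg -> Prop :=
| fs_here x y s : ivl_lt x y -> fstep [:: x, y & s] [:: refl_mu x y, x & s]
| fs_cons z s s' : fstep s s' -> fstep (z :: s) (z :: s').

Inductive star : seq seg -> seq seg -> Prop :=
| st_refl l : star l l
| st_step l1 l2 l3 : fstep l1 l2 -> star l2 l3 -> star l1 l3.

Lemma star_trans a b c : star a b -> star b c -> star a c.
Proof. by elim=> // l1 l2 l3 h _ IH /IH; apply: st_step. Qed.
Lemma star1 a b : fstep a b -> star a b.
Proof. by move=> h; apply: st_step h (st_refl _). Qed.
Lemma star_cons z a b : star a b -> star (z :: a) (z :: b).
Proof. elim=> [l|l1 l2 l3 h _ IH]; first exact: st_refl.
by apply: st_step IH; apply: fs_cons. Qed.

Definition joinable a b := exists c, star a c /\ star b c.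

Lemma ivl_lt_trans x y w : ivl_lt x y -> ivl_lt y w -> ivl_lt x w.
Proof.
rewrite /ivl_lt => /and3P[h1 h2 h3] /and3P[h4 h5 h6].
apply/and3P; split; [exact: le_trans h1 h4|exact: le_trans h5 h2|].
case: (eqVneq (sA x) (sA w)) => //= ex; case: (eqVneq (sB x) (sB w)) => //= eb.
have ea : sA x = sA y by apply/eqP; rewrite eq_le h1 /= ex.
have eb' : sB x = sB y by apply/eqP; rewrite eq_le h2 andbT eb.
by move: h3; rewrite ea eb' !eqxx.
Qed.

Lemma ivl_lt_asym x y : ivl_lt x y -> ~~ ivl_lt y x.
Proof.
rewrite /ivl_lt => /and3P[h1 h2 h3]; apply/negP => /and3P[h4 h5 h6].
have ea : sA x = sA y by apply/eqP; rewrite eq_le h1 h4.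
have eb : sB x = sB y by apply/eqP; rewrite eq_le h2 h5.
by move: h3; rewrite ea eb !eqxx.
Qed.

Lemma lc_here x y s l2 : ivl_lt x y -> fstep [:: x, y & s] l2 ->
  joinable [:: refl_mu x y, x & s] l2.
Proof.
move=> hxy h; inversion h; subst.
- by exists [:: refl_mu x y, x & s]; split; apply: st_refl.
- match goal with H : fstep (y :: s) _ |- _ => inversion H; subst end.
  +
    rename y0 into w. rename s0 into s.
    have hxw : ivl_lt x w by apply: ivl_lt_trans hxy _; assumption.
    exists [:: refl_mu x (refl_mu y w), refl_mu x y, x & s]; split.
    * apply: st_step; first by apply: fs_cons; apply: fs_here; exact: hxw.
      have -> : refl_mu x (refl_mu y w) = refl_mu (refl_mu x y) (refl_mu x w).
        by rewrite /refl_mu /=; congr Seg; ring.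
      by apply: star1; apply: fs_here.
    * apply: st_step; first by apply: fs_here.
      by apply: star1; apply: fs_cons; apply: fs_here.
  + exists [:: refl_mu x y, x & s'0]; split.
    * by apply: star_cons; apply: star_cons; apply: star1.
    * by apply: star1; apply: fs_here.
Qed.

Lemma joinable_sym a b : joinable a b -> joinable b a.
Proof. by case=> c [h1 h2]; exists c. Qed.

Lemma lc l l1 l2 : fstep l l1 -> fstep l l2 -> joinable l1 l2.
Proof.
move=> h; elim: h l2 => [x y s hxy|z s s' h IH] l2 h2.
  exact: lc_here.
inversion h2; subst.
- apply: joinable_sym; apply: lc_here => //; exact: fs_cons.
- have [c [c1 c2]] := IH _ H2. by exists (z :: c); split; apply: star_cons.
Qed.

Fixpoint inv (l : seq seg) : nat :=
  if l is x :: s then (count (ivl_lt x) s + inv s)%N else 0%N.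

Lemma fstep_count (p : pred seg) l l' :
  (forall a b, sA a = sA b -> sB a = sB b -> p a = p b) ->
  fstep l l' -> count p l = count p l'.
Proof.
move=> hp; elim=> [x y s _|z s s' _ IH] /=; last by rewrite IH.
by rewrite (hp (refl_mu x y) y) // addnCA.
Qed.

Lemma fstep_inv l l' : fstep l l' -> inv l = (inv l').+1.
Proof.
elim=> [x y s hxy|z s s' h IH] /=.
  rewrite hxy; have -> : ivl_lt (refl_mu x y) x = false by exact: (negbTE (ivl_lt_asym hxy)).
  have -> : count (ivl_lt (refl_mu x y)) s = count (ivl_lt y) s by [].
  by rewrite /= !add0n add1n; lia.
rewrite IH addnS; congr (_.+1); congr (_ + _)%N.
by apply: fstep_count h => a b ea eb; rewrite /ivl_lt ea eb.
Qed.

Lemma newman n l : (inv l < n)%N -> forall l1 l2, star l l1 -> star l l2 -> joinable l1 l2.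
Proof.
elim: n l => // n IH l hn l1 l2 h1 h2.
case: h1 hn h2 => [l0|l0 a l1' ha ha1] hn h2.
  by exists l2; split => //; apply: st_refl.
case: h2 ha ha1 hn => [l0'|l0' b l2' hb hb2] ha ha1 hn.
  by exists l1'; split; [apply: st_refl | apply: st_step ha ha1].
have [c [ac bc]] := lc ha hb.
have ia := fstep_inv ha; have ib := fstep_inv hb.
have [d [l1d cd]] : joinable l1' c by apply: (IH a) => //; lia.
have [e [l2e de]] : joinable l2' d by apply: (IH b) => //; [lia | apply: star_trans bc cd].
by exists e; split => //; apply: star_trans l1d de.
Qed.

Lemma confluent l l1 l2 : star l l1 -> star l l2 -> joinable l1 l2.
Proof. exact: (@newman (inv l).+1). Qed.

Definition conv := clos_refl_sym_trans (seq seg) fstep.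

Lemma conv_join a b : conv a b -> joinable a b.
Proof.
elim=> [x y h|x|x y _ IH|x y w _ IH1 _ IH2].
- by exists y; split; [apply: star1|apply: st_refl].
- by exists x; split; apply: st_refl.
- exact: joinable_sym.
- case: IH1 => [c1 [xc1 yc1]]; case: IH2 => [c2 [yc2 wc2]].
  have [c3 [h1 h2]] := confluent yc1 yc2.
  by exists c3; split; apply: star_trans; eassumption.
Qed.

Definition normal l := forall l', ~ fstep l l'.

Lemma normal_star l l' : normal l -> star l l' -> l' = l.
Proof. by move=> hn h; case: h hn => // l1 l2 l3 h _ hn; case: (hn _ h). Qed.

Lemma conv_normal a b : conv a b -> normal a -> normal b -> a = b.
Proof.
move=> /conv_join [c [ac bc]] na nb.
by rewrite -(normal_star na ac) -(normal_star nb bc).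
Qed.

Lemma fstep_nth l l' : fstep l l' ->
  exists i, (i.+1 < size l)%N /\ ivl_lt (nth seg0 l i) (nth seg0 l i.+1).
Proof.
elim=> [x y s h|z s s' _ [i [h1 h2]]]; first by exists 0%N.
by exists i.+1.
Qed.

Lemma fstep_dec l l' : fstep l l' -> exists s1 x y s2,
  [/\ l = s1 ++ [:: x, y & s2], l' = s1 ++ [:: refl_mu x y, x & s2] & ivl_lt x y].
Proof.
elim=> [x y s h|z s s' _ [s1 [x [y [s2 [-> -> h]]]]]].
  by exists [::], x, y, s.
by exists (z :: s1), x, y, s2.
Qed.

Lemma fstep_app s1 l l' : fstep l l' -> fstep (s1 ++ l) (s1 ++ l').
Proof. by elim: s1 => //= z s1 IH h; apply: fs_cons; apply: IH. Qed.

Lemma step_or_sorted l : (exists l', fstep l l') \/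
  (forall i, (i.+1 < size l)%N -> ~~ ivl_lt (nth seg0 l i) (nth seg0 l i.+1)).
Proof.
elim: l => [|x s IH]; first by right.
case: s IH => [|y s] IH; first by right; case.
case hxy: (ivl_lt x y).
  by left; eexists; apply: fs_here.
case: IH => [[l' h]|h]; first by left; exists (x :: l'); apply: fs_cons.
by right; case=> [|i] //= hi; [rewrite hxy | apply: h].
Qed.

Definition condp (x y : seg) : bool :=
  `|((smu y - smu x)%:~R : rat)| <= `|sA y - sA x| + `|sB y - sB x|.

Lemma bnatE s : sA s - sB s \is a Num.nat -> (bnat s)%:R = sA s - sB s + 1.
Proof. by move=> h; rewrite /bnat truncnK // rpredD. Qed.

Lemma ext_refl x y : ivl_lt x y -> condp x y -> ext_seg x -> ext_seg y ->
  ext_seg (refl_mu x y).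
Proof.
move=> hxy hc [[nx px] ex] [[ny py] ey].
split; first split => //=.
  change (2 %| (2 * smu x - smu y) - (bnat y)%:Z)%Z. lia.
change (absz (2 * smu x - smu y)%R <= bnat y)%N.
have bx := bnatE nx; have by_ := bnatE ny.
move: hxy; rewrite /ivl_lt => /and3P[h1 h2 _].
have key : (`|smu y - smu x| <= (bnat y)%:Z - (bnat x)%:Z)%R.
  rewrite -(ler_int rat) intr_norm !rmorphB /=.
  have e1 : forall n : nat, ((n%:Z)%:~R : rat) = n%:R by move=> n; rewrite pmulrn.
  rewrite !e1 bx by_.
  move: hc; rewrite /condp (ger0_norm (x := sA y - sA x)) ?subr_ge0 //.
  rewrite (ler0_norm (x := sB y - sB x)) ?subr_le0 //.
  rewrite rmorphB /= => hc; lra.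
move: key; rewrite -abszE. lia.
Qed.

Lemma fstep_mem l l' s' : fstep l l' -> s' \in l' ->
  exists2 s, s \in l & (sA s = sA s' /\ sB s = sB s').
Proof.
move=> h; elim: h s' => [x y s hxy|z s s0 h IH] s'; rewrite !inE.
  case/or3P => [/eqP->|/eqP->|hs].
  - by exists y; rewrite ?inE ?eqxx ?orbT.
  - by exists x; rewrite ?inE ?eqxx.
  - by exists s'; rewrite ?inE ?hs ?orbT.
case/orP => [/eqP->|/IH [s1 h1 h2]]; first by exists z; rewrite ?inE ?eqxx.
by exists s1; rewrite ?inE ?h1 ?orbT.
Qed.

Lemma fstep_all (p : pred seg) l l' :
  (forall a b, sA a = sA b -> sB a = sB b -> p a = p b) ->
  fstep l l' -> all p l -> all p l'.
Proof.
move=> hp h /allP hl; apply/allP => s' /(fstep_mem h) [s sin [ea eb]].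
by rewrite -(hp _ _ ea eb); apply: hl.
Qed.

Lemma fstep_allP (P : seg -> Prop) l l' :
  (forall a b, sA a = sA b -> sB a = sB b -> P a -> P b) ->
  fstep l l' -> (forall s, s \in l -> P s) -> (forall s, s \in l' -> P s).
Proof.
move=> hp h hl s' /(fstep_mem h) [s sin [ea eb]].
by apply: (hp s) => //; apply: hl.
Qed.

Lemma fstep_big (R : Type) (idx : R) (op : Monoid.com_law idx) (F : seg -> R) l l' :
  (forall a b, sA a = sA b -> sB a = sB b -> F a = F b) ->
  fstep l l' -> \big[op/idx]_(s <- l) F s = \big[op/idx]_(s <- l') F s.
Proof.
move=> hF; elim=> [x y s _|z s s' _ IH]; rewrite !big_cons; last by rewrite IH.
by rewrite (hF (refl_mu x y) y) // Monoid.mulmCA.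
Qed.

Lemma fstep_ext l l' : fstep l l' -> sorted condp l ->
  (forall s, s \in l -> ext_seg s) -> (forall s, s \in l' -> ext_seg s).
Proof.
elim=> [x y s hxy|z s s' h IH] hs hl s0; rewrite inE.
  case/orP => [/eqP->|hin]; last by apply: hl; move: hin; rewrite !inE => /orP[->|->]; rewrite ?orbT.
  apply: ext_refl => //.
  - by move: hs => /= /andP[].
  - by apply: hl; rewrite !inE eqxx.
  - by apply: hl; rewrite !inE eqxx orbT.
case/orP => [/eqP->|hin]; first by apply: hl; rewrite inE eqxx.
apply: IH => //; first exact: path_sorted hs.
by move=> s1 h1; apply: hl; rewrite inE h1 orbT.
Qed.

Lemma fstep_sorted_pair s1 x y s2 (e : rel seg) :
  sorted e (s1 ++ [:: x, y & s2]) -> e x y.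
Proof.
elim: s1 => [|z s1 IH] /=; first by case/andP.
by move=> /path_sorted; apply: IH.
Qed.

Definition ordrel (x y : seg) : bool := ~~ ((sA y < sA x) && (sB y < sB x)).

Lemma fstep_pairwise l l' : fstep l l' -> pairwise ordrel l -> pairwise ordrel l'.
Proof.
elim=> [x y s hxy|z s s' h IH] /=.
  move=> /and3P[/andP[o1 o2] o3 o4]; apply/andP; split; apply/andP; split => //.
  move: hxy; rewrite /ordrel /ivl_lt => /and3P[_ h2 _] /=.
  by rewrite negb_and orbC -leNgt h2.
move=> /andP[o1 o2]; apply/andP; split; last exact: IH.
by apply: fstep_all h o1 => a b ea eb; rewrite /ordrel ea eb.
Qed.

Fixpoint ps_aux (c : int) (l : seq seg) : int :=
  if l is x :: s then
    ((smu x %/ 2)%Z + smu x * c + ps_aux (c + ((bnat x)%:Z - 1)) s)%R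
  else 0.

Definition pl (l : seq seg) : int :=
  \sum_(i < size l)
      ((smu (nth seg0 l i) %/ 2)%Z +
       smu (nth seg0 l i) * (\sum_(j < i) ((bnat (nth seg0 l j))%:Z - 1))).

Lemma ps_auxE c l : ps_aux c l =
  \sum_(i < size l)
      ((smu (nth seg0 l i) %/ 2)%Z +
       smu (nth seg0 l i) * (c + \sum_(j < i) ((bnat (nth seg0 l j))%:Z - 1))).
Proof.
elim: l c => [|x s IH] c /=; first by rewrite big_ord0.
rewrite big_ord_recl /= big_ord0 !addr0 IH; congr (_ + _).
apply: eq_bigr => i _; rewrite big_ord_recl /= !addrA //.
Qed.

Lemma plE l : pl l = ps_aux 0 l.
Proof. by rewrite ps_auxE /pl; apply: eq_bigr => i _; rewrite add0r. Qed.

Lemma divz2_refl (m x : int) : (m %/ 2)%Z - ((2 * x - m) %/ 2)%Z = m - x.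
Proof. lia. Qed.

Lemma fstep_parity l l' c : fstep l l' ->
  (forall s, s \in l -> (2 %| smu s - (bnat s)%:Z)%Z) ->
  (2 %| ps_aux c l - ps_aux c l')%Z.
Proof.
move=> h; elim: h c => [x y s hxy|z s s' h IH] c hl /=; last first.
  have -> : forall a b d : int, a + b - (a + d) = b - d by move=> a b d; ring.
  by apply: IH => s0 hs; apply: hl; rewrite inE hs orbT.
have px : (2 %| smu x - (bnat x)%:Z)%Z by apply: hl; rewrite inE eqxx.
have py : (2 %| smu y - (bnat y)%:Z)%Z by apply: hl; rewrite !inE eqxx orbT.
change (bnat (refl_mu x y)) with (bnat y).
have -> : c + ((bnat y)%:Z - 1) + ((bnat x)%:Z - 1) = c + ((bnat x)%:Z - 1) + ((bnat y)%:Z - 1) by ring.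
set T := ps_aux _ s.
move: (divz2_refl (smu y) (smu x)).
set u := (smu y %/ 2)%Z; set v := ((2 * smu x - smu y) %/ 2)%Z.
move=> huv.
have -> : u = v + (smu y - smu x) by rewrite -huv; ring.
move: px py => /dvdzP[k hk] /dvdzP[m hm].
have ex : smu x = (bnat x)%:Z + k * 2 by rewrite -hk; ring.
have ey : smu y = (bnat y)%:Z + m * 2 by rewrite -hm; ring.
rewrite /= ex ey; apply/dvdzP.
exists (((bnat y)%:Z + m * 2 - ((bnat x)%:Z + k * 2)) * c + m * (bnat x)%:Z - k * (bnat y)%:Z)%R. ring.
Qed.

Section FM.
Variable Cusp : choiceType.
Implicit Types (S T U : mseg Cusp).

Lemma segsE T k : T.[? k]%fmap = if k \in domf T then Some (segs T k) else None.
Proof. by rewrite /segs; case: fndP. Qed.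

Lemma fmap_ext T U : domf T = domf U -> (forall k, segs T k = segs U k) -> T = U.
Proof.
move=> hd hs; apply/fmapP => k; rewrite !segsE hd hs //.
Qed.

Lemma condN_sorted T r : condN T -> sorted condp (segs T r).
Proof.
move=> h; apply/(sortedP seg0) => i hi.
by have := h r i.+1 (ltn0Sn _) hi.
Qed.

Lemma condp_eq x y : sA x = sA y -> sB x = sB y -> condp x y -> smu x = smu y.
Proof.
rewrite /condp => -> -> ; rewrite !subrr ?normr0 ?addr0 normr_le0 intr_eq0 subr_eq0.
by move/eqP.
Qed.

Lemma seg_eta x : x = Seg (sA x) (sB x) (smu x).
Proof. by case: x. Qed.

Lemma refl_mu_inv y x : refl_mu y (Seg (sA x) (sB x) (2 * smu y - smu x)) = x.
Proof. case: x => a b m; rewrite /refl_mu /=; f_equal; ring. Qed.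

Lemma Rstep_cases T U : Rstep T U -> condN T ->
  domf U = domf T /\ forall r, segs U r = segs T r \/
     fstep (segs T r) (segs U r) \/ fstep (segs U r) (segs T r).
Proof.
move=> [r0 [s1 [x [y [s2 [x' [y' [hr [hT [hst ->]]]]]]]]]] hN.
split; first by rewrite dom_setf mem_fset1U.
move=> r; rewrite /segs fnd_set; case: eqP => [->|_]; last by left.
rewrite -/(segs T r0) hT /=.
have hc : condp x y by apply: (fstep_sorted_pair (s1 := s1) (s2 := s2)); rewrite -hT; apply: condN_sorted.
case: hst => [[[h1 h2] [-> ->]]|[[h1 h2] [-> ->]]].
- case hl: (ivl_lt x y).
    right; left; apply: fstep_app; rewrite -seg_eta; exact: (fs_here _ hl).
  have [ea eb] : sA x = sA y /\ sB x = sB y.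
    move: hl; rewrite /ivl_lt h1 h2 /= => /negbT; rewrite negb_or !negbK => /andP[/eqP -> /eqP ->]; done.
  have em := condp_eq ea eb hc.
  left; move: ea eb em; case: x {hT hc h1 h2 hl} => ax bx mx; case: y => ay b_ my /= -> -> ->.
  by have -> : 2 * my - my = my by ring.
- case hl: (ivl_lt y x).
    right; right; apply: fstep_app.
    rewrite -(seg_eta y); have h := @fs_here y (Seg (sA x) (sB x) (2 * smu y - smu x)) s2 hl.
    by rewrite refl_mu_inv in h.
  have [ea eb] : sA y = sA x /\ sB y = sB x.
    move: hl; rewrite /ivl_lt h1 h2 /= => /negbT; rewrite negb_or !negbK => /andP[/eqP -> /eqP ->]; done.
  have em := condp_eq (esym ea) (esym eb) hc.
  left; move: ea eb em; case: x {hT hc h1 h2 hl} => ax bx mx; case: y => ay b_ my /= -> -> ->.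
  by have -> : 2 * my - my = my by ring.
Qed.


Lemma equiv_conv (S T : mseg Cusp) : (forall U : mseg Cusp, equiv_ms S U -> condN U) -> equiv_ms S T ->
  domf T = domf S /\ forall r, conv (segs S r) (segs T r).
Proof.
move=> hN /clos_rst_rstn1_iff h.
elim: h => [|y z hyz h [dy cy]].
  by split => // r; apply: rst_refl.
have ey : equiv_ms S y by apply/clos_rst_rstn1_iff.
have ez : equiv_ms S z.
  apply: rst_trans ey _; case: hyz => ?; [apply: rst_step | apply: rst_sym; apply: rst_step]; done.
case: hyz => hyz.
  have [dz cz] := Rstep_cases hyz (hN _ ey).
  split; first by rewrite dz.
  move=> r; apply: rst_trans (cy r) _; case: (cz r) => [->|[h'|h']];
    [apply: rst_refl|apply: rst_step|apply: rst_sym; apply: rst_step]; done.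
have [dz cz] := Rstep_cases hyz (hN _ ez).
split; first by rewrite -dz.
move=> r; apply: rst_trans (cy r) _; case: (cz r) => [->|[h'|h']];
  [apply: rst_refl|apply: rst_sym; apply: rst_step|apply: rst_step]; done.
Qed.

Lemma standard_normal T r : standard T -> normal (segs T r).
Proof.
move=> hs l' /fstep_nth [i [hi]]; rewrite /ivl_lt => /and3P[h1 h2 h3].
have := hs r i.+1 i hi (ltnW hi); rewrite /sg.
suff H : sB (nth seg0 (segs T r) i.+1) < sB (nth seg0 (segs T r) i) \/
   sB (nth seg0 (segs T r) i.+1) = sB (nth seg0 (segs T r) i) /\
   sA (nth seg0 (segs T r) i) < sA (nth seg0 (segs T r) i.+1).
  by move/(_ H); rewrite ltnNge leqnSn.
move: h2; rewrite le_eqVlt => /orP[/eqP e|lt]; last by left.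
right; split => //; rewrite lt_neqAle h1 andbT.
by move: h3; rewrite e eqxx orbF.
Qed.

Lemma segs_set T r l k : segs T.[r <- l]%fmap k = if k == r then l else segs T k.
Proof. by rewrite /segs fnd_set; case: eqP. Qed.

Lemma dom_set_in T r l : r \in domf T -> domf T.[r <- l]%fmap = domf T.
Proof. by move=> h; rewrite dom_setf mem_fset1U. Qed.

Lemma Rstep_fstep T r l' : r \in domf T -> fstep (segs T r) l' -> Rstep T T.[r <- l']%fmap.
Proof.
move=> hr /fstep_dec [s1 [x [y [s2 [hl -> hxy]]]]].
exists r, s1, x, y, s2, (refl_mu x y), x; do 3!(split => //).
left; move: hxy; rewrite /ivl_lt => /and3P[h1 h2 _].
by do 2!split => //; apply: seg_eta.
Qed.

Lemma transferP T r l' (P : Cusp -> seg -> Prop) :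
  (forall k a b, sA a = sA b -> sB a = sB b -> P k a -> P k b) ->
  fstep (segs T r) l' -> r \in domf T ->
  (forall k, k \in domf T -> forall s, s \in segs T k -> P k s) ->
  (forall k, k \in domf T.[r <- l']%fmap -> forall s, s \in segs T.[r <- l']%fmap k -> P k s).
Proof.
move=> hP h hr H k; rewrite dom_set_in // segs_set => hk.
case: eqP => [?|_]; first subst; last exact: H.
by apply: (fstep_allP (hP _) h); apply: H.
Qed.

Lemma transfer_big T r l' (R : Type) (idx : R) (op : Monoid.com_law idx)
   (F : Cusp -> seg -> R) :
  (forall k a b, sA a = sA b -> sB a = sB b -> F k a = F k b) ->
  fstep (segs T r) l' -> r \in domf T ->
  \big[op/idx]_(k <- enum_fset (domf T.[r <- l']%fmap)) \big[op/idx]_(s <- segs T.[r <- l']%fmap k) F k s =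
  \big[op/idx]_(k <- enum_fset (domf T)) \big[op/idx]_(s <- segs T k) F k s.
Proof.
move=> hF h hr; rewrite dom_set_in //; apply: eq_bigr => k _.
rewrite segs_set; case: eqP => [?|_] //; subst.
by apply/esym/fstep_big => //; apply: hF.
Qed.

Definition ordcond (l : seq seg) := forall i j, (i < size l)%N -> (j < size l)%N ->
  sA (nth seg0 l j) < sA (nth seg0 l i) -> sB (nth seg0 l j) < sB (nth seg0 l i) -> (j < i)%N.

Lemma ord_to_pw l : ordcond l -> pairwise ordrel l.
Proof.
move=> H; apply/(pairwiseP seg0) => i j hi hj hij; rewrite /ordrel.
apply/negP => /andP[a b]; have := H i j hi hj a b; lia.
Qed.

Lemma pw_to_ord l : pairwise ordrel l -> ordcond l.
Proof.
move=> hpw i j hi hj a b; case: (ltngtP i j) => [hij|//|e].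
  by move/(pairwiseP seg0): hpw => H; have := H i j hi hj hij; rewrite /ordrel a b.
by move: a; rewrite e ltxx.
Qed.

Lemma ext_step (deg : Cusp -> nat) (symp : Cusp -> bool) (Chi : zmodType) (detc : Cusp -> Chi)
  T r l' : r \in domf T -> fstep (segs T r) l' -> condN T ->
  ext_ms deg symp detc T -> ext_ms deg symp detc T.[r <- l']%fmap.
Proof.
move=> hr h hN [[hA [hB [hC [[g [n hD]] hE]]]] hX].
have hX' : forall k, k \in domf T.[r <- l']%fmap -> forall s, s \in segs T.[r <- l']%fmap k -> ext_seg s.
  move=> k; rewrite dom_set_in // segs_set => hk.
  case: eqP => [?|_]; first subst; last exact: hX.
  by apply: (fstep_ext h); [apply: condN_sorted | apply: hX].
split => //; split; first by move=> k hk s hs; case: (hX' k hk s hs).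
split.
  move=> k; apply: pw_to_ord; rewrite segs_set; case: eqP => [?|_]; first subst.
    by apply: (fstep_pairwise h); apply: ord_to_pw => i j; apply: hB.
  by apply: ord_to_pw => i j; apply: hB.
split.
  by apply: (transferP (P := fun _ s => 0 <= sA s + sB s)) => // k a b -> ->.
split.
  exists g, n; move: hD; rewrite /good_parity_AP => -[hD1 hD2]; split.
    by apply: (transferP (P := fun _ s => (sA s + sB s \is a Num.int) /\ 0 <= sA s + sB s)) => // k a b -> ->.
  case: g hD2 => [[hs hsum]|[hs [hsum hdet]]].
    split.
      by apply: (transferP (P := fun k s => summand_symp symp k s)) => // k a b ea eb;
        rewrite /summand_symp /anat /bnat ea eb.
    rewrite -hsum; apply: (@transfer_big T r l' nat 0%N addn (fun k s => (deg k * anat s * bnat s)%N)) => //.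
    by move=> k a b ea eb; rewrite /anat /bnat ea eb.
  split.
    by apply: (transferP (P := fun k s => ~~ summand_symp symp k s)) => // k a b ea eb;
      rewrite /summand_symp /anat /bnat ea eb.
  split.
    rewrite -hsum; apply: (@transfer_big T r l' nat 0%N addn (fun k s => (deg k * anat s * bnat s)%N)) => //.
    by move=> k a b ea eb; rewrite /anat /bnat ea eb.
  rewrite (@transfer_big T r l' Chi 0 +%R (fun k s => detc k *+ (anat s * bnat s))) //.
  by move=> k a b ea eb; rewrite /anat /bnat ea eb.
have -> : parity_sum T.[r <- l']%fmap = \sum_(k <- enum_fset (domf T)) pl (segs T.[r <- l']%fmap k).
  by rewrite /parity_sum dom_set_in.
have ePT : parity_sum T = \sum_(k <- enum_fset (domf T)) pl (segs T k) by [].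
rewrite ePT in hE.
have -> : \sum_(k <- enum_fset (domf T)) pl (segs T.[r <- l']%fmap k) =
   \sum_(k <- enum_fset (domf T)) pl (segs T k) -
   \sum_(k <- enum_fset (domf T)) (pl (segs T k) - pl (segs T.[r <- l']%fmap k)).
  by rewrite sumrB opprB addrC subrK.
suff H2 : (2 %| \sum_(k <- enum_fset (domf T)) (pl (segs T k) - pl (segs T.[r <- l']%fmap k)))%Z.
  by move: hE H2; lia.
apply: (big_ind (fun z : int => (2 %| z)%Z)) => //; first by move=> a b; lia.
move=> k _; rewrite segs_set; case: eqP => [?|_]; first subst; last by rewrite subrr.
rewrite !plE; apply: fstep_parity h _ => s hs.
by case: (hX r hr s hs) => [[_ hp] _].
Qed.

Definition locsorted (l : seq seg) :=
  forall i, (i.+1 < size l)%N -> ~~ ivl_lt (nth seg0 l i) (nth seg0 l i.+1).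

Lemma segs_notin T r : r \notin domf T -> segs T r = [::].
Proof. by move=> h; rewrite /segs not_fnd. Qed.

Lemma sort_one (deg : Cusp -> nat) (symp : Cusp -> bool) (Chi : zmodType) (detc : Cusp -> Chi)
  (S : mseg Cusp) r : (forall U : mseg Cusp, equiv_ms S U -> condN U) ->
  forall n (T : mseg Cusp), (inv (segs T r) < n)%N -> equiv_ms S T -> ext_ms deg symp detc T ->
  exists U : mseg Cusp, [/\ equiv_ms S U, ext_ms deg symp detc U, domf U = domf T,
    locsorted (segs U r) & forall k, k != r -> segs U k = segs T k].
Proof.
move=> hN; elim=> [|n IH] T // hn eT xT.
case: (step_or_sorted (segs T r)) => [[l' h]|hs]; last by exists T.
have hr : r \in domf T.
  apply/negPn/negP => /segs_notin e; rewrite e in h; inversion h.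
have hR := Rstep_fstep hr h.
have eU : equiv_ms S T.[r <- l']%fmap by apply: rst_trans eT (rst_step _ _ _ _ hR).
have xU := ext_step hr h (hN _ eT) xT.
have iU : (inv (segs T.[r <- l']%fmap r) < n)%N.
  by rewrite segs_set eqxx; move: hn; rewrite (fstep_inv h).
have [U [e1 e2 e3 e4 e5]] := IH _ iU eU xU.
exists U; split => //; first by rewrite e3 dom_set_in.
by move=> k hk; rewrite e5 // segs_set (negbTE hk).
Qed.

Lemma sort_all (deg : Cusp -> nat) (symp : Cusp -> bool) (Chi : zmodType) (detc : Cusp -> Chi)
  (S : mseg Cusp) (ks : seq Cusp) : (forall U : mseg Cusp, equiv_ms S U -> condN U) ->
  forall (T : mseg Cusp), equiv_ms S T -> ext_ms deg symp detc T ->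
  exists U : mseg Cusp, [/\ equiv_ms S U, ext_ms deg symp detc U, domf U = domf T &
    forall r, r \in ks -> locsorted (segs U r)].
Proof.
move=> hN; elim: ks => [|r ks IH] T eT xT; first by exists T.
have [U1 [e1 e2 e3 e4]] := IH T eT xT.
have [U [f1 f2 f3 f4 f5]] := sort_one (r := r) hN (ltnSn (inv (segs U1 r))) e1 e2.
exists U; split => //; first by rewrite f3.
move=> k; rewrite inE; case: (eqVneq k r) => [->|hk] //= hin.
by rewrite f5 //; apply: e4.
Qed.

Definition kle (x y : seg) : bool := (sB x < sB y) || ((sB x == sB y) && (sA y <= sA x)).

Lemma kle_trans : ssrbool.transitive kle.
Proof.
move=> y x z; rewrite /kle => /orP[h1|/andP[/eqP e1 h1]] /orP[h2|/andP[/eqP e2 h2]].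
- by rewrite (lt_trans h1 h2).
- by rewrite -e2 h1.
- by rewrite e1 h2.
- by rewrite e1 e2 eqxx (le_trans h2 h1) orbT.
Qed.

Lemma adj_kle x y : ~~ ivl_lt x y -> ordrel x y -> kle x y.
Proof.
rewrite /ivl_lt /ordrel /kle => h1 h2.
case: (ltgtP (sB x) (sB y)) => hb //=.
  move: h2; rewrite hb andbT -leNgt => ha.
  by move: h1; rewrite ha (ltW hb) /= (gt_eqF hb) orbT.
case: (leP (sA y) (sA x)) => // ha.
by move: h1; rewrite (ltW ha) hb lexx /= (lt_eqF ha).
Qed.

Lemma std_of (U : mseg Cusp) : (forall r, locsorted (segs U r)) ->
  (forall r, ordcond (segs U r)) -> standard U.
Proof.
move=> hl ho r i j hi hj hk; rewrite /sg in hk.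
have pw := ord_to_pw (ho r).
have so : sorted kle (segs U r).
  apply/(sortedP seg0) => k hk1; apply: adj_kle; first exact: hl.
  by move/(pairwiseP seg0): pw => H; apply: H => //; rewrite inE /=; lia.
case: (ltngtP i j) => // hji.
  have := sorted_ltn_nth kle_trans seg0 so; move=> /(_ j i); rewrite !inE => /(_ hj hi hji).
  rewrite /kle; case: hk => [h|[e h]].
    by rewrite (gt_eqF h) andFb orbF ltNge (ltW h).
  by rewrite e ltxx eqxx /= leNgt h.
by move: hk; rewrite hji ltxx => -[//|[_]]; rewrite ltxx.
Qed.

End FM.

Theorem proposition3p5 (Cusp : choiceType) (deg : Cusp -> nat) (symp : Cusp -> bool)
    (Chi : zmodType) (detc : Cusp -> Chi)
    (deg_pos : forall r, (0 < deg r)%N)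
    (detc_quadratic : forall r, (detc r *+ 2 = 0)%R)
    (detc_symp : forall r, symp r -> detc r = 0%R)
    (S : mseg Cusp) :
  in_Rep deg symp detc S ->
  exists! S' : mseg Cusp,
    equiv_ms S S' /\ ext_ms deg symp detc S' /\ standard S'.
Proof.
move=> [hext [_ [hN _]]].
have [U [eU xU dU sU]] := sort_all (enum_fset (domf S)) hN (rst_refl _ _ S) hext.
have stdU : standard U.
  apply: std_of.
    move=> r; case: (boolP (r \in domf S)) => hr; first exact: sU.
    by rewrite segs_notin ?dU //; case.
  by case: xU => [[_ [hB _]] _] r i j; apply: hB.
exists U; split; first by split.
move=> V [eV [_ sV]].
have [dU' cU] := equiv_conv hN eU.
have [dV cV] := equiv_conv hN eV.
apply: fmap_ext; first by rewrite dU' dV.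
move=> k; apply: conv_normal; try exact: standard_normal.
by apply: rst_trans (rst_sym _ _ _ _ (cU k)) (cV k).
Qed.
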